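(* Let $\mathsf{T}$ be a rooted plane tree and $\delta\in\mathcal{O}(\mathsf{T})$. (i) For every $v\in\mathsf{T}$ and every $u\in M_\delta(v)$, the ornamentation $\delta_u^v$ is covered by $\delta$ in $\mathcal{O}(\mathsf{T})$. (ii) For every ornamentation $\delta'$ covered by $\delta$ in $\mathcal{O}(\mathsf{T})$, there exist $v\in\mathsf{T}$ and $u\in M_\delta(v)$ such that $\delta'=\delta_u^v$. (iii) For all $v\in\mathsf{T}$, $\mathsf{Pop}(\delta)(v)=\bigcap_{u\in M_\delta(v)}\delta_u^v(v)$ (where the empty intersection is interpreted as $\delta(v)$).
   Context: A rooted plane tree $\mathsf{T}$ is a finite tree with a distinguished root, regarded as a poset $\leq_\mathsf{T}$ in which $v'\leq_\mathsf{T} v$ iff $v$ lies on the path from $v'$ to the root. An ornament is a nonempty set of nodes inducing a connected subgraph. For a set $S$ of nodes and $u\in S$, $\Delta_S(u)=\{w\in S:w\leq_\mathsf{T} u\}$. An ornamentation is a map $\delta$ from $\mathsf{T}$ to ornaments such that the unique maximal element of $\delta(v)$ is $v$ and any two sets $\delta(v),\delta(v')$ are nested or disjoint. $\mathcal{O}(\mathsf{T})$ is the set of ornamentations ordered by $\delta\leq\delta'$ iff $\delta(v)\subseteq\delta'(v)$ for all $v$; it is a lattice with meet given by pointwise intersection. $\mathsf{Pop}(\delta)=\bigwedge(\{\delta\}\cup\{\delta':\delta'\lessdot\delta\})$. For distinct nodes $u,v$, $v$ wraps $u$ in $\delta$ if $\delta(u)\subseteq\delta(v)$ and there is no node $w$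 with $\delta(u)\subsetneq\delta(w)\subsetneq\delta(v)$. When $v$ wraps $u$, the reduction of $\delta(v)$ by $u$ is $\delta(v)\setminus\Delta_{\delta(v)}(u)$, and $\delta_u^v$ is the ornamentation with $\delta_u^v(v)=\delta(v)\setminus\Delta_{\delta(v)}(u)$ and $\delta_u^v(w)=\delta(w)$ for $w\neq v$. A minimal reduction of $\delta(v)$ is a reduction of $\delta(v)$ (by some node wrapped by $v$) that is not properly contained in any other reduction of $\delta(v)$. $M_\delta(v)$ is the set of nodes $u\in\delta(v)$ wrapped by $v$ such that $\delta(v)\setminus\Delta_{\delta(v)}(u)$ is a minimal reduction of $\delta(v)$. *)

(* Defs.v *)
From mathcomp Require Import all_boot.
Set Implicit Arguments. Unset Strict Implicit. Unset Printing Implicit Defensive.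

Section Ornaments.
Variable V : finType.
Variable root : V.
Variable par : V -> V.

Definition rooted_tree : Prop :=
  par root = root /\ forall v : V, exists k, iter k par v = root.

(* v' <=_T v iff v lies on the path from v' to the root *)
Definition leT (v' v : V) : bool := connect (frel par) v' v.

Definition adjT (x y : V) : bool :=
  ((x != root) && (par x == y)) || ((y != root) && (par y == x)).

Definition ornament (S : {set V}) : bool :=
  (S != set0) &&
  [forall x in S, forall y in S,
     connect [rel a b | [&& a \in S, b \in S & adjT a b]] x y].

Definition maximal_in (S : {set V}) (m : V) : bool :=
  (m \in S) && [forall w in S, leT m w ==> (w == m)].

Definition ornamentation (d : {ffun V -> {set V}}) : bool :=
  [forall v, ornament (d v)] &&
  [forall v, maximal_in (d v) v && [forall m, maximal_in (d v) m ==> (m == v)]] &&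
  [forall v, forall v', [|| d v \subset d v', d v' \subset d v
                          | [disjoint d v & d v']]].

Definition orn_le (d d' : {ffun V -> {set V}}) : bool :=
  [forall v, d v \subset d' v].

Definition orn_lt (d d' : {ffun V -> {set V}}) : bool :=
  orn_le d d' && (d != d').

Definition covby (d' d : {ffun V -> {set V}}) : bool :=
  [&& ornamentation d', ornamentation d, orn_lt d' d &
      [forall e : {ffun V -> {set V}},
         ornamentation e ==> ~~ (orn_lt d' e && orn_lt e d)]].

(* Pop(d) = meet of d and its lower covers; meet in O(T) is pointwise
   intersection *)
Definition Pop (d : {ffun V -> {set V}}) (v : V) : {set V} :=
  d v :&: \bigcap_(d' : {ffun V -> {set V}} | covby d' d) d' v.

Definition wraps (d : {ffun V -> {set V}}) (v u : V) : bool :=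
  [&& u != v, d u \subset d v &
      [forall w, ~~ ((d u \proper d w) && (d w \proper d v))]].

Definition Delta (S : {set V}) (u : V) : {set V} := [set w in S | leT w u].

Definition reduction (d : {ffun V -> {set V}}) (v u : V) : {set V} :=
  d v :\: Delta (d v) u.

Definition orn_red (d : {ffun V -> {set V}}) (u v : V) : {ffun V -> {set V}} :=
  [ffun w => if w == v then reduction d v u else d w].

Definition minimal_reduction (d : {ffun V -> {set V}}) (v : V) (R : {set V}) : bool :=
  [exists u, wraps d v u && (R == reduction d v u)] &&
  [forall u', wraps d v u' ==> ~~ (R \proper reduction d v u')].

Definition Mset (d : {ffun V -> {set V}}) (v : V) : {set V} :=
  [set u in d v | wraps d v u && minimal_reduction d v (reduction d v u)].

End Ornaments.

(* Main.v *)
Require Import Defs.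
From mathcomp Require Import all_boot.
Set Implicit Arguments. Unset Strict Implicit. Unset Printing Implicit Defensive.

Section Tree.
Variable V : finType.
Variable root : V.
Variable par : V -> V.
Hypothesis hT : rooted_tree root par.

Local Notation le := (leT par).

Lemma le_refl x : le x x.
Proof. exact: connect0. Qed.

Lemma le_trans x y z : le x y -> le y z -> le x z.
Proof. exact: connect_trans. Qed.

Lemma le_par x : le x (par x).
Proof. exact: fconnect1. Qed.

Lemma leP x y : le x y -> exists k, iter k par x = y.
Proof. by move=> /iter_findex h; exists (findex par x y). Qed.

Lemma le_iter k x : le x (iter k par x).
Proof. exact: fconnect_iter. Qed.

Lemma iter_root m : iter m par root = root.
Proof. by case: hT => hr _; elim: m => //= m ->. Qed.

Lemma le_root x : le x root.
Proof. by case: hT => _ /(_ x) [k <-]; apply: le_iter. Qed.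

Lemma iter_mul n i x : iter i par x = x -> iter (n * i) par x = x.
Proof.
move=> h; elim: n => [|n IH] //=.
by rewrite mulSn iterD IH h.
Qed.

Lemma le_anti x y : le x y -> le y x -> x = y.
Proof.
move=> /leP [i hi] /leP [j hj].
have hx : iter (j + i) par x = x by rewrite iterD hi hj.
case: (posnP (j + i)) => [h0|hpos].
  by move: h0 hi => /eqP; rewrite addn_eq0 => /andP [_ /eqP ->] /= <-.
case: hT => _ /(_ x) [k hk].
have : iter (k * (j + i)) par x = x by apply: iter_mul.
have hk' : k <= k * (j + i) by rewrite leq_pmulr.
rewrite -(subnK hk') iterD hk iter_root => hxr.
by move: hi; rewrite -hxr iter_root.
Qed.

Lemma le_total x a b : le x a -> le x b -> le a b || le b a.
Proof.
move=> /leP [i <-] /leP [j <-].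
case: (leqP i j) => hij.
  by rewrite -(subnK hij) iterD le_iter.
by rewrite -(subnK (ltnW hij)) iterD le_iter orbT.
Qed.

Lemma adj_edge a b y : adjT root par a b -> le a y -> ~~ le b y -> a = y.
Proof.
case/orP => /andP [_ /eqP hp] hay hby.
  move: hay; rewrite /leT fconnect_eqVf hp => /orP [/eqP //| h].
  by move: hby; rewrite /leT h.
by move: hby; rewrite (le_trans _ hay) //= -hp le_par.
Qed.

Lemma adj_sym : symmetric (adjT root par).
Proof. by move=> a b; rewrite /adjT orbC. Qed.

Lemma par_fix x : par x = x -> x = root.
Proof.
move=> hx; case: hT => _ /(_ x) [k hk].
have h : forall n, iter n par x = x by elim=> //= n ->.
by rewrite -hk h.
Qed.

End Tree.

Section Top.
Variable V : finType.
Variable root : V.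
Variable par : V -> V.
Hypothesis hT : rooted_tree root par.
Local Notation le := (leT par).

Definition topset (S : {set V}) v := [/\ v \in S, forall x, x \in S -> le x v
  & forall x y, x \in S -> le x y -> le y v -> y \in S].

Definition erel (S : {set V}) := [rel a b | [&& a \in S, b \in S & adjT root par a b]].

Lemma path_hit S y p a : path (erel S) a p -> a \in S -> le a y ->
  ~~ le (last a p) y -> y \in S.
Proof.
elim: p a => [|b p IH] a /=; first by move=> _ _ h; rewrite h.
move=> /andP [/and3P [aS bS ab] hp] _ hay hl.
case hby: (le b y); first exact: IH hp bS hby hl.
by rewrite -(adj_edge ab hay (negbT hby)).
Qed.

Lemma orn_top S v : ornament root par S -> maximal_in par S v ->
  (forall m, maximal_in par S m -> m == v) -> topset S v.
Proof.
case/andP => _ /forallP hc /andP [vS /forallP hmax] huniq.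
have hle : forall x, x \in S -> le x v.
  move=> x xS.
  pose A := [set y in S | le x y].
  have xA : x \in A by rewrite inE xS le_refl.
  case: (arg_minnP (fun y => #|[set z | le y z]|) xA) => y.
  move=> yA hmin; have : y \in A by []; rewrite inE => /andP [yS xy].
  suff /eqP <- : y == v by [].
  apply: huniq; rewrite /maximal_in yS /=; apply/forallP => w; apply/implyP => wS.
  apply/implyP => yw; apply/negPn/negP => nwy.
  have wA : w \in A by rewrite inE wS (le_trans xy yw).
  have := hmin w wA.
  apply/negP; rewrite -ltnNge; apply: proper_card; apply/properP; split.
    by apply/subsetP => z; rewrite !inE => wz; apply: le_trans yw wz.
  exists y; rewrite !inE ?le_refl //; apply/negP => wy.
  by rewrite (@le_anti _ _ _ hT _ _ wy yw) eqxx in nwy.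
split => // x y xS xy yv.
case: (eqVneq y v) => [-> //| nyv].
have := hc x; rewrite xS => /forallP /(_ v); rewrite vS /= => /connectP [p hp hl].
apply: (path_hit hp xS xy); rewrite -hl; apply/negP => vy.
by move/negP: nyv; apply; apply/eqP; apply: (le_anti hT).
Qed.

Lemma top_orn S v : topset S v ->
  [/\ ornament root par S, maximal_in par S v & forall m, maximal_in par S m -> m == v].
Proof.
case=> vS hle hcv.
have hup : forall x, x \in S -> connect (erel S) x v.
  move=> x xS; have [k hk] := leP (hle x xS).
  elim: k x xS hk => [|k IH] x xS hk; first by rewrite -hk; apply: connect0.
  case: (eqVneq x v) => [-> |nxv]; first exact: connect0.
  rewrite iterSr in hk.
  have pxS : par x \in S.
    apply: (hcv x) => //; first exact: le_par.
    by rewrite -hk le_iter.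
  apply: connect_trans (IH _ pxS hk).
  apply: connect1; rewrite /= xS pxS /= /adjT eqxx andbT.
  apply/orP; left; apply/eqP => xr; move: hk; rewrite xr.
  by rewrite -iterSr (iter_root hT) => hv; by rewrite -hv -xr eqxx in nxv.
have hsym : connect_sym (erel S).
  by apply: sym_connect_sym => a b /=; rewrite adj_sym andbCA.
split.
- apply/andP; split; first by apply/set0Pn; exists v.
  apply/forallP => x; apply/implyP => xS; apply/forallP => y; apply/implyP => yS.
  by apply: connect_trans (hup x xS) _; rewrite hsym; apply: hup.
- rewrite /maximal_in vS /=; apply/forallP => w; apply/implyP => wS; apply/implyP => vw.
  by apply/eqP; apply: (le_anti hT) => //; apply: hle.
- move=> m /andP [mS /forallP /(_ v)]; rewrite vS /= => /implyP h.
  by rewrite eq_sym h // hle.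
Qed.

End Top.

Section Main.
Variable V : finType.
Variable root : V.
Variable par : V -> V.
Hypothesis hT : rooted_tree root par.
Local Notation le := (leT par).

Lemma disjP (A B : {set V}) : reflect (forall x, x \in A -> x \notin B) [disjoint A & B].
Proof.
rewrite disjoints_subset; apply: (iffP subsetP) => h x xA.
  by have := h x xA; rewrite inE.
by rewrite inE h.
Qed.

Definition lam (A B : {set V}) := [|| A \subset B, B \subset A | [disjoint A & B]].

Lemma lamC A B : lam A B = lam B A.
Proof. by rewrite /lam disjoint_sym orbA (orbC (A \subset B)) -orbA. Qed.

Definition good (d : {ffun V -> {set V}}) :=
  (forall v, topset par (d v) v) /\ (forall v w, lam (d v) (d w)).

Lemma ornP d : ornamentation root par d <-> good d.
Proof.
split.
  case/andP => /andP [/forallP ho /forallP hm] /forallP hl; split.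
    move=> v; have /andP [mv /forallP hu] := hm v.
    by apply: (orn_top hT (ho v) mv) => m; apply/implyP.
  by move=> v w; move/forallP: (hl v) => /(_ w).
case=> ht hl; apply/andP; split; first (apply/andP; split).
- by apply/forallP => v; case: (top_orn hT (ht v)).
- apply/forallP => v; case: (top_orn hT (ht v)) => _ -> hu /=.
  by apply/forallP => m; apply/implyP; apply: hu.
- by apply/forallP => v; apply/forallP => w; apply: hl.
Qed.

Section G.
Variable d : {ffun V -> {set V}}.
Hypothesis hd : good d.

Lemma d_self v : v \in d v.
Proof. by case: (hd.1 v). Qed.

Lemma d_le v x : x \in d v -> le x v.
Proof. by case: (hd.1 v) => _ h _; apply: h. Qed.

Lemma d_conv v x y : x \in d v -> le x y -> le y v -> y \in d v.
Proof. by case: (hd.1 v) => _ _; apply. Qed.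

Lemma d_inj v w : d v = d w -> v = w.
Proof.
move=> e; apply: (le_anti hT).
  by apply: d_le; rewrite -e d_self.
by apply: d_le; rewrite e d_self.
Qed.

Lemma d_lam v w : [\/ d v \subset d w, d w \subset d v | [disjoint d v & d w]].
Proof. exact/or3P/(hd.2 v w). Qed.

Lemma d_sub x v : x \in d v -> d x \subset d v.
Proof.
move=> xv; case: (d_lam x v) => // [h|/disjP h].
  have vx : v \in d x by apply: (subsetP h); apply: d_self.
  rewrite (@le_anti _ _ _ hT x v (d_le xv) (d_le vx)); exact: subxx.
by have := h x (d_self x); rewrite xv.
Qed.

Lemma redE v u y : (y \in reduction par d v u) = (y \in d v) && ~~ le y u.
Proof. by rewrite /reduction /Delta !inE andbC; case: (y \in d v). Qed.

Lemma exists_wrap v x : x \in d v -> x != v -> exists w, wraps d v w && (x \in d w).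
Proof.
move=> xv nxv.
pose A := [set w | (x \in d w) && (d w \proper d v)].
have xA : x \in A.
  rewrite inE d_self /= properEneq d_sub // andbT.
  by apply/eqP => /d_inj e; rewrite e eqxx in nxv.
case: (arg_maxnP (fun w => #|d w|) xA) => w wA hmax.
have : w \in A by []; rewrite inE => /andP [xw wv].
exists w; rewrite xw andbT /wraps (proper_sub wv) /=; apply/andP; split.
  by apply/eqP => e; move: wv; rewrite e properE subxx.
apply/forallP => z; apply/negP => /andP [wz zv].
have zA : z \in A by rewrite inE zv andbT (subsetP (proper_sub wz)).
by have := hmax z zA => /=; rewrite leqNgt (proper_card wz).
Qed.


Lemma wrapsE v u : wraps d v u ->
  [/\ u != v, d u \subset d v & forall w, ~~ ((d u \proper d w) && (d w \proper d v))].
Proof. by case/and3P => a b /forallP c. Qed.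

Lemma wrap_in v u : wraps d v u -> [/\ u \in d v, le u v & ~~ le v u].
Proof.
case/wrapsE => nuv suv _.
have uv : u \in d v by apply: (subsetP suv); apply: d_self.
split => //; first exact: d_le.
apply/negP => vu; move: nuv; rewrite (@le_anti _ _ _ hT u v (d_le uv) vu) eqxx //.
Qed.

Lemma ornredE u v w : orn_red par d u v w = if w == v then reduction par d v u else d w.
Proof. by rewrite /orn_red ffunE. Qed.

Lemma red_sub v u : reduction par d v u \subset d v.
Proof. exact: subsetDl. Qed.

Lemma red_good v u : wraps d v u -> good (orn_red par d u v).
Proof.
move=> wr; have [uv luv nvu] := wrap_in wr.
have [nuv suv hw] := wrapsE wr.
have topR : topset par (reduction par d v u) v.
  split.
  - by rewrite redE d_self.
  - by move=> x; rewrite redE => /andP [xv _]; apply: d_le.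
  - move=> x y; rewrite !redE => /andP [xv nxu] xy yv.
    rewrite (d_conv xv xy yv) /=; apply/negP => yu.
    by move/negP: nxu; apply; apply: le_trans xy yu.
have lamR : forall w, w != v -> lam (reduction par d v u) (d w).
  move=> w nwv; apply/or3P.
  case: (d_lam v w) => [h|h|h].
  - by apply: Or31; apply: subset_trans h; apply: red_sub.
  - case lwu: (le w u).
      apply: Or33; apply/disjP => y; rewrite redE => /andP [_ nyu].
      apply/negP => yw; move/negP: nyu; apply; apply: le_trans (d_le yw) lwu.
    apply: Or32; apply/subsetP => y yw; rewrite redE (subsetP h _ yw) /=.
    apply/negP => yu.
    have := le_total (d_le yw) yu; rewrite lwu /= => wu'.
    have uw : u \in d w by apply: (d_conv yw yu wu').
    case: (d_lam u w) => [h1|h1|/disjP h1].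
    + have /negP := hw w; apply; rewrite !properEneq h1 h !andbT /=.
      apply/andP; split; apply/eqP => /d_inj e.
        by rewrite e le_refl in lwu.
      by rewrite e eqxx in nwv.
    + by move: lwu; rewrite d_le // (subsetP h1) // d_self.
    + by have := h1 u (d_self u); rewrite uw.
  - apply: Or33; apply/disjP => y /(subsetP (red_sub v u)) yv.
    by move/disjP: h => /(_ y yv).
split.
  by move=> w; rewrite ornredE; case: eqP => [->|_] //; apply: (hd.1 w).
move=> a b; rewrite !ornredE.
case: (a =P v) => [ea|/eqP nav]; case: (b =P v) => [eb|/eqP nbv].
- by rewrite /lam subxx.
- exact: lamR.
- by rewrite lamC; apply: lamR.
- exact: (hd.2 a b).
Qed.

Lemma red_lt v u : wraps d v u -> orn_lt (orn_red par d u v) d.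
Proof.
move=> wr; have [uv luv nvu] := wrap_in wr.
apply/andP; split.
  apply/forallP => w; rewrite ornredE; case: eqP => [->|_]; first exact: red_sub.
  exact: subxx.
apply/eqP => /ffunP /(_ v); rewrite ornredE eqxx => e.
by move: uv; rewrite -e redE le_refl andbF.
Qed.

Lemma key E v x : topset par E v -> E \subset d v -> x \in d v -> x \notin E ->
  (forall w, wraps d v w -> lam E (d w)) ->
  exists w, wraps d v w /\ E \subset reduction par d v w.
Proof.
case=> vE hEle hEc sEv xv xE hl.
have nxv : x != v by apply/eqP => e; rewrite e vE in xE.
have [w /andP [wr xw]] := exists_wrap xv nxv.
have [wv lwv nvw] := wrap_in wr.
have [nwv _ _] := wrapsE wr.
exists w; split => //.
case/or3P: (hl w wr) => [h|h|/disjP h].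
- by move: nvw; rewrite d_le // (subsetP h).
- by move: xE; rewrite (subsetP h).
- apply/subsetP => y yE; rewrite redE (subsetP sEv _ yE) /=.
  apply/negP => yw.
  by have := h w (hEc y w yE yw lwv); rewrite d_self.
Qed.

Lemma max_red v w : wraps d v w ->
  exists u, u \in Mset par d v /\ reduction par d v w \subset reduction par d v u.
Proof.
move=> ww.
pose A := [set u | wraps d v u && (reduction par d v w \subset reduction par d v u)].
have wA : w \in A by rewrite inE ww subxx.
case: (arg_maxnP (fun u => #|reduction par d v u|) wA) => u uA hmax.
have : u \in A by []; rewrite inE => /andP [wu sub].
exists u; split => //.
have [uv _ _] := wrap_in wu.
rewrite inE uv wu /=; apply/andP; split.
  by apply/existsP; exists u; rewrite wu eqxx.
apply/forallP => u'; apply/implyP => wu'; apply/negP => pr.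
have u'A : u' \in A.
  by rewrite inE wu' (subset_trans sub (proper_sub pr)).
by have := hmax u' u'A => /=; rewrite leqNgt (proper_card pr).
Qed.

End G.
End Main.

Lemma ffun_neq_at (V : finType) (f g : {ffun V -> {set V}}) v :
  (forall w, w != v -> f w = g w) -> f != g -> f v != g v.
Proof.
move=> h; apply: contra => /eqP fv; apply/eqP/ffunP => w.
by case: (eqVneq w v) => [->|nwv] //; apply: h.
Qed.

Lemma le_between (V : finType) (d1 d2 e : {ffun V -> {set V}}) v :
  orn_le d1 e -> orn_le e d2 -> (forall w, w != v -> d1 w = d2 w) ->
  forall w, w != v -> e w = d1 w.
Proof.
move=> /forallP h1 /forallP h2 h w nwv; apply/eqP; rewrite eqEsubset h1 andbT.
by rewrite h //; apply: h2.
Qed.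

Theorem lemma2p4 (V : finType) (root : V) (par : V -> V)
  (hT : rooted_tree root par) (d : {ffun V -> {set V}})
  (hd : ornamentation root par d) :
  (forall v u, u \in Mset par d v -> covby root par (orn_red par d u v) d) /\
  (forall d', covby root par d' d ->
     exists v u, u \in Mset par d v /\ d' = orn_red par d u v) /\
  (forall v, Pop root par d v =
     if Mset par d v == set0 then d v
     else \bigcap_(u in Mset par d v) orn_red par d u v v).
Proof.
have hg : good par d := (ornP hT d).1 hd.
have partI : forall v u, u \in Mset par d v -> covby root par (orn_red par d u v) d.
  move=> v u; rewrite inE => /and3P [uv wr /andP [_ /forallP hmin]].
  set d' := orn_red par d u v.
  have hd' : ornamentation root par d' := (ornP hT d').2 (red_good hT hg wr).
  have same : forall w, w != v -> d' w = d w.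
    by move=> w nwv; rewrite /d' ornredE (negbTE nwv).
  apply/and4P; split => //; first exact: (red_lt hT hg wr).
  apply/forallP => e; apply/implyP => he; apply/negP => /andP [/andP [l1 n1] /andP [l2 n2]].
  have hge : good par e := (ornP hT e).1 he.
  have ee := le_between l1 l2 same.
  have ee' : forall w, w != v -> e w = d w.
    by move=> w nwv; rewrite ee // same.
  have nv1 := ffun_neq_at (fun w nw => esym (ee w nw)) n1.
  have nv2 := ffun_neq_at ee' n2.
  have s1 : d' v \subset e v by move/forallP: l1.
  have s2 : e v \subset d v by move/forallP: l2.
  have : ~~ (d v \subset e v).
    by apply: contra nv2 => h; rewrite eqEsubset s2 h.
  case/subsetPn => x xv xe.
  have [w [ww sw]] := key hT hg (hge.1 v) s2 xv xe (fun w ww =>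
     match wrapsE ww with And3 nwv _ _ => ltac:(rewrite -(ee' w nwv); exact: (hge.2 v w)) end).
  have := hmin w; rewrite ww /= => /negP; apply.
  have pr : d' v \proper e v by rewrite properEneq nv1 s1.
  by move: pr; rewrite /d' ornredE eqxx => pr; apply: proper_sub_trans pr sw.
have partII : forall d', covby root par d' d ->
     exists v u, u \in Mset par d v /\ d' = orn_red par d u v.
  move=> d' /and4P [hd' _ /andP [le' ne'] /forallP hcov].
  have hg' : good par d' := (ornP hT d').1 hd'.
  have : exists w, d' w != d w.
    by apply/existsP; apply: contraR ne' => /existsPn h; apply/eqP/ffunP => w; apply/eqP/negPn/h.
  case=> w0 hw0.
  pose S := [set w | d' w != d w].
  have w0S : w0 \in S by rewrite inE.
  case: (arg_minnP (fun w => #|d w|) w0S) => v vS hmin.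
  have : v \in S by []; rewrite inE => nv.
  have s1 : d' v \subset d v by move/forallP: le'.
  have : ~~ (d v \subset d' v).
    by apply: contra nv => h; rewrite eqEsubset s1 h.
  case/subsetPn => x xv xe.
  have hl : forall w, wraps d v w -> lam (d' v) (d w).
    move=> w ww; have [nwv sub hw] := wrapsE ww.
    have pr : d w \proper d v.
      rewrite properEneq sub andbT; apply/eqP => /(d_inj hT hg) e.
      by rewrite e eqxx in nwv.
    have : d' w = d w.
      apply/eqP; apply/negPn/negP => nw.
      have wS : w \in S by rewrite inE.
      by have := hmin w wS => /=; rewrite leqNgt (proper_card pr).
    by move=> <-; apply: (hg'.2 v w).
  have [w [ww sw]] := key hT hg (hg'.1 v) s1 xv xe hl.
  have [u [uM su]] := max_red hT hg ww.
  exists v, u; split => //.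
  have wu : wraps d v u by move: uM; rewrite inE => /and3P [].
  set e := orn_red par d u v.
  case: (eqVneq d' e) => // ne.
  have he : ornamentation root par e := (ornP hT e).2 (red_good hT hg wu).
  have := hcov e; rewrite he /= => /negP; case.
  rewrite (red_lt hT hg wu) andbT /orn_lt ne andbT.
  apply/forallP => w2; rewrite /e ornredE; case: eqP => [->|_].
    exact: subset_trans sw su.
  by move/forallP: le'.
split => //; split => // v.
apply/setP => y; rewrite /Pop in_setI.
case: ifP => [/eqP M0 | /negbT M1].
  apply/andP/idP => [[] //| yv]; split => //.
  apply/bigcapP => d' /partII [v' [u [uM ->]]].
  rewrite ornredE; case: (eqVneq v v') => [e|nv]; last exact: yv.
  by move: uM; rewrite -e M0 inE.
apply/andP/idP => [[yv /bigcapP h]|/bigcapP h].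
  by apply/bigcapP => u uM; apply: h; apply: partI.
have [u0 u0M] := set0Pn _ M1.
have yv : y \in d v.
  by have := h u0 u0M; rewrite ornredE eqxx => /(subsetP (red_sub _ _ _ _)).
split => //; apply/bigcapP => d' /partII [v' [u [uM ->]]].
rewrite ornredE; case: (eqVneq v v') => [e|nv]; last exact: yv.
by move: uM; rewrite -e => uM; have := h u uM; rewrite ornredE eqxx.
Qed.
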